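(* Assume the standing hypotheses and let $\sigma\in(0,1)$. For $(x,\lambda)\in\mathcal B((x^*,\lambda^* ),\delta)$ with $x>0,\lambda>0$, let $(\Delta x^N,\Delta\lambda^N)$ be the Newton direction for $\mu^+=\sigma\mu$, and define for $i=1,\dots,n$ $$\Delta x_i^C=-x_i+\frac{\mu^+}{\lambda_i},\qquad \Delta\lambda_i^C=-\lambda_i+\frac{\mu^+}{x_i}.$$ Then for all $i$, $\Delta x_i^C-\Delta x_i^N=\frac{x_i}{\lambda_i}\Delta\lambda_i^N$ and $\Delta\lambda_i^C-\Delta\lambda_i^N=\frac{\lambda_i}{x_i}\Delta x_i^N$. Moreover, for every $C_1>0$ there exist $\rho>0$, $\bar\mu\in(0,\hat\mu]$ and $C>0$ such that for all $\mu\in(0,\bar\mu]$ and all $(x,\lambda)\in\mathcal B((x^*,\lambda^* ),\delta)$ with $x>0,\lambda>0$, $\|(x,\lambda)-(x^\mu,\lambda^\mu)\|<\rho$, $\|F_\mu(x,\lambda)\|\le C_1\mu$: $$|\Delta x_i^C-\Delta x_i^N|\le C\mu^2\ (i\in\mathcal A),\qquad |\Delta\lambda_i^C-\Delta\lambda_i^N|\le C\mu^2\ (i\in\mathcal I).$$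
   Context: Problem: minimize $f(x)$ subject to $x\ge0$, $f:\mathbb R^n\to\mathbb R$ twice continuously differentiable with locally Lipschitz Hessian. Norms Euclidean; $e$ all-ones; $X=\mathrm{diag}(x)$, $\Lambda=\mathrm{diag}(\lambda)$; $F_\mu(x,\lambda)=\begin{bmatrix}\nabla f(x)-\lambda\\ \Lambda Xe-\mu e\end{bmatrix}$, $F'(x,\lambda)=\begin{bmatrix}\nabla^2f(x)&-I\\ \Lambda&X\end{bmatrix}$. The Newton direction for $\mu^+=\sigma\mu$ solves $F'(x,\lambda)(\Delta x^N,\Delta\lambda^N)=-F_{\mu^+}(x,\lambda)$. Standing hypotheses: $(x^*,\lambda^* )$ satisfies $\nabla f(x^* )=\lambda^*$, $x^*\ge0$, $\lambda^*\ge0$, $x_i^*\lambda_i^*=0$, $x^*+\lambda^*>0$, $[\nabla^2f(x^* )]_{\mathcal I\mathcal I}\succ0$, where $\mathcal A=\{i:x^*_i=0\}$, $\mathcal I=\{i:x_i^*>0\}$. $\delta>0$: $F'$ nonsingular on $\mathcal B((x^*,\lambda^* ),\delta)$ with $\|F'^{-1}\|\le M$; $\hat\mu>0$: for $\mu\in(0,\hat\mu]$ a Lipschitz barrier trajectory $(x^\mu,\lambda^\mu)\in\mathcal B((x^*,\lambda^* ),\delta)$ with $F_\mu(x^\mu,\lambda^\mu)=0$, $\|(x^\mu,\lambda^\mu)-(x^*,\lambda^* )\|\le C_4\mu$ exists. *)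

(* Defs.v *)
From HB Require Import structures.
From mathcomp Require Import all_boot all_order all_algebra.
From mathcomp Require Import all_classical all_reals all_analysis.
Set Implicit Arguments. Unset Strict Implicit. Unset Printing Implicit Defensive.
Import Order.TTheory GRing.Theory Num.Theory.
Import numFieldNormedType.Exports.
Local Open Scope ring_scope.

Section Defs.
Variable R : realType.
Variable n : nat.
Local Notation vec := 'cV[R]_n.

Definition enorm m (v : 'cV[R]_m) : R := Num.sqrt (\sum_(i < m) (v i 0) ^+ 2).

Definition pdist (x l y k : vec) : R := enorm (col_mx x l - col_mx y k).

Definition ebasis (i : 'I_n) : vec := delta_mx i 0.

Definition grad (f : vec -> R) (x : vec) : vec :=
  \col_i derive f x (ebasis i).
Definition hess (f : vec -> R) (x : vec) : 'M[R]_n :=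
  \matrix_(i, j) derive (fun y => grad f y i 0) x (ebasis j).

Definition C2_locLipHess (f : vec -> R) : Prop :=
  (forall x, differentiable f x) /\
  (forall x, differentiable (grad f) x) /\
  continuous (hess f) /\
  (forall x, exists r : R, exists L : R, 0 < r /\
     forall y z, `|y - x| < r -> `|z - x| < r ->
        `|hess f y - hess f z| <= L * `|y - z|).

Definition Fmu (f : vec -> R) (mu : R) (x l : vec) : 'cV[R]_(n + n) :=
  col_mx (grad f x - l) (\col_i (l i 0 * x i 0 - mu)).

Definition Fprime (f : vec -> R) (x l : vec) : 'M[R]_(n + n) :=
  block_mx (hess f x) (- 1%:M) (diag_mx l^T) (diag_mx x^T).

Definition vpos (v : vec) : Prop := forall i, 0 < v i 0.

Definition standing_hyps (f : vec -> R) (xs ls : vec) (delta M muhat C4 : R)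
  (xmu lmu : R -> vec) : Prop :=
  C2_locLipHess f /\
  grad f xs = ls /\
  (forall i, 0 <= xs i 0) /\ (forall i, 0 <= ls i 0) /\
  (forall i, xs i 0 * ls i 0 = 0) /\
  (forall i, 0 < xs i 0 + ls i 0) /\
  (* [hess f(xs)]_{II} positive definite, I = {i : x*_i > 0} *)
  (forall v : vec, v != 0 -> (forall i, xs i 0 = 0 -> v i 0 = 0) ->
      0 < (v^T *m hess f xs *m v) 0 0) /\
  0 < delta /\
  (forall x l, pdist x l xs ls < delta ->
     Fprime f x l \in unitmx /\
     forall w : 'cV[R]_(n + n), enorm (invmx (Fprime f x l) *m w) <= M * enorm w) /\
  0 < muhat /\
  (forall mu, 0 < mu <= muhat ->
     vpos (xmu mu) /\ vpos (lmu mu) /\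
     pdist (xmu mu) (lmu mu) xs ls < delta /\
     Fmu f mu (xmu mu) (lmu mu) = 0 /\
     pdist (xmu mu) (lmu mu) xs ls <= C4 * mu) /\
  (exists L : R, forall mu1 mu2, 0 < mu1 <= muhat -> 0 < mu2 <= muhat ->
     pdist (xmu mu1) (lmu mu1) (xmu mu2) (lmu mu2) <= L * `|mu1 - mu2|).

End Defs.

(* Main.v *)
Require Import Defs.
From HB Require Import structures.
From mathcomp Require Import all_boot all_order all_algebra.
From mathcomp Require Import all_classical all_reals all_analysis.
From mathcomp Require Import ring lra.
Import Order.TTheory GRing.Theory Num.Theory.
Import numFieldNormedType.Exports.
Local Open Scope ring_scope.
Set Implicit Arguments. Unset Strict Implicit.

Lemma seq_posmin (R : realType) (s : seq R) :
  (forall a, a \in s -> 0 < a) -> exists m : R, 0 < m /\ forall a, a \in s -> m <= a.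
Proof.
elim: s => [_|b s IH Hp]; first by exists 1; split => // a.
have [m [m0 Hm]] := IH (fun a Ha => Hp a (ltac:(by rewrite inE Ha orbT))).
have b0 : 0 < b by apply: Hp; rewrite inE eqxx.
exists (Num.min m b); split; first by rewrite lt_min m0 b0.
move=> a; rewrite inE => /orP [/eqP ->|Ha]; first by rewrite ge_min lexx orbT.
by rewrite ge_min Hm.
Qed.

Lemma fin_posmin (R : realType) n (a : 'I_n -> R) :
  (forall i, 0 < a i) -> exists m : R, 0 < m /\ forall i, m <= a i.
Proof.
move=> Ha.
have [m [m0 Hm]] := @seq_posmin R [seq a i | i <- enum 'I_n]
  (fun b Hb => let: ex_intro2 i _ e := mapP Hb in ltac:(rewrite e; exact: Ha)).
exists m; split => // i; apply: Hm; apply: map_f; by rewrite mem_enum.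
Qed.

Lemma enorm_entry (R : realType) m (v : 'cV[R]_m) i : `|v i 0| <= enorm v.
Proof.
rewrite /enorm -sqrtr_sqr ler_sqrt; last by apply: sumr_ge0 => j _; apply: sqr_ge0.
rewrite (bigD1 i) //= lerDl; by apply: sumr_ge0 => j _; apply: sqr_ge0.
Qed.

Lemma pdist_x (R : realType) n (x l y k : 'cV[R]_n) i :
  `|x i 0 - y i 0| <= pdist x l y k.
Proof.
have := @enorm_entry R (n+n)%N (col_mx x l - col_mx y k) (lshift n i).
by rewrite /pdist [in X in X -> _]mxE opp_col_mx !col_mxEu [in X in X -> _]mxE -opp_col_mx.
Qed.

Lemma pdist_l (R : realType) n (x l y k : 'cV[R]_n) i :
  `|l i 0 - k i 0| <= pdist x l y k.
Proof.
have := @enorm_entry R (n+n)%N (col_mx x l - col_mx y k) (rshift n i).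
by rewrite /pdist [in X in X -> _]mxE opp_col_mx !col_mxEd [in X in X -> _]mxE -opp_col_mx.
Qed.

Lemma Fmu_bot (R : realType) n (f : 'cV[R]_n -> R) mu x l i :
  Fmu f mu x l (rshift n i) 0 = l i 0 * x i 0 - mu.
Proof. by rewrite /Fmu col_mxEd mxE. Qed.

Lemma newton_bot (R : realType) n (f : 'cV[R]_n -> R) mu x l dx dl i :
  Fprime f x l *m col_mx dx dl = - Fmu f mu x l ->
  l i 0 * dx i 0 + x i 0 * dl i 0 = - (l i 0 * x i 0 - mu).
Proof.
rewrite /Fprime /Fmu mul_block_col opp_col_mx !mul_diag_mx => /eq_col_mx [_ /matrixP /(_ i 0)].
by rewrite !mxE.
Qed.

Lemma enorm_Fsig (R : realType) n (f : 'cV[R]_n -> R) mu sigma x l C1 :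
  0 < mu -> 0 < sigma < 1 -> 0 <= C1 -> enorm (Fmu f mu x l) <= C1 * mu ->
  enorm (Fmu f (sigma * mu) x l) <= Num.sqrt (2 * C1 ^+ 2 + 2 * (n + n)%:R) * mu.
Proof.
move=> mu0 /andP [s0 s1] C0 HF.
have Hs : \sum_(k < n + n) (Fmu f mu x l k 0) ^+ 2 <= (C1 * mu) ^+ 2.
  have e0 : 0 <= \sum_(k < n + n) (Fmu f mu x l k 0) ^+ 2.
    by apply: sumr_ge0 => j _; apply: sqr_ge0.
  rewrite -(sqr_sqrtr e0) lerXn2r ?nnegrE ?sqrtr_ge0 //; last first.
    by apply: mulr_ge0 => //; apply: ltW.
rewrite /enorm -[X in _ <= _ * X]gtr0_norm // -sqrtr_sqr -sqrtrM; last first.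
  by apply: addr_ge0; apply: mulr_ge0 => //; apply: sqr_ge0.
rewrite ler_sqrt; last by apply: mulr_ge0; [apply: addr_ge0; apply: mulr_ge0 => //; apply: sqr_ge0|apply: sqr_ge0].
apply: (@le_trans _ _ (\sum_(k < n + n) (2 * (Fmu f mu x l k 0) ^+ 2 + 2 * mu ^+ 2))).
  apply: ler_sum => k _.
  rewrite (_ : k = fintype.unsplit (fintype.split k)); last by rewrite splitK.
  case: (fintype.split k) => j /=.
    rewrite /Fmu !col_mxEu; nra.
  rewrite /Fmu !col_mxEd !mxE.
  set a := l j 0 * x j 0.
  have h1 : 0 <= (a - mu - (1 - sigma) * mu) ^+ 2 by apply: sqr_ge0.
  have h2 : ((1 - sigma) * mu) ^+ 2 <= mu ^+ 2.
    rewrite exprMn ler_piMl // ?sqr_ge0 //; nra.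
  have -> : a - sigma * mu = (a - mu) + (1 - sigma) * mu by ring.
  nra.
rewrite big_split /= -mulr_sumr sumr_const card_ord.
rewrite -mulr_natr; nra.
Qed.

Lemma key_bound (R : realType) (a b d m q E : R) :
  0 < m -> m / 2 <= b -> 0 <= a -> a * b <= q -> `|d| <= E ->
  `|a / b * d| <= 4 * q / m ^+ 2 * E.
Proof.
move=> m0 hb a0 hab hd.
have b0 : 0 < b by apply: lt_le_trans hb; rewrite divr_gt0.
have q0 : 0 <= q by apply: le_trans hab; apply: mulr_ge0 => //; apply: ltW.
rewrite normrM ger0_norm; last by apply: divr_ge0 => //; apply: ltW.
apply: ler_pM => //; first by apply: divr_ge0 => //; apply: ltW.
have t1 : 1 <= 2 * b / m by rewrite ler_pdivlMr // mul1r; lra.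
have -> : a / b = a * b / b ^+ 2 by field; apply: lt0r_neq0.
rewrite ler_pdivrMr; last by apply: exprn_gt0.
have -> : 4 * q / m ^+ 2 * b ^+ 2 = q * (2 * b / m) ^+ 2.
  by field; apply: lt0r_neq0.
apply: (le_trans hab); move: t1; set t := 2 * b / m => t1.
have : 1 <= t ^+ 2 by rewrite expr_ge1 //; lra.
nra.
Qed.

Lemma enorm_opp (R : realType) m (v : 'cV[R]_m) : enorm (- v) = enorm v.
Proof. by rewrite /enorm; congr Num.sqrt; apply: eq_bigr => i _; rewrite mxE sqrrN. Qed.

Theorem proposition2 (R : realType) (n : nat) (f : 'cV[R]_n -> R)
  (xs ls : 'cV[R]_n) (delta M muhat C4 : R) (xmu lmu : R -> 'cV[R]_n)
  (H : standing_hyps f xs ls delta M muhat C4 xmu lmu)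
  (sigma : R) (Hsigma : 0 < sigma < 1) :
  (* part 1: the algebraic identities *)
  (forall (mu : R) (x l dxN dlN : 'cV[R]_n),
     0 < mu -> pdist x l xs ls < delta -> vpos x -> vpos l ->
     Fprime f x l *m col_mx dxN dlN = - Fmu f (sigma * mu) x l ->
     forall i : 'I_n,
       ((- x i 0 + sigma * mu / l i 0) - dxN i 0 = x i 0 / l i 0 * dlN i 0) /\
       ((- l i 0 + sigma * mu / x i 0) - dlN i 0 = l i 0 / x i 0 * dxN i 0)) /\
  (* part 2: O(mu^2) estimates *)
  (forall C1 : R, 0 < C1 ->
   exists rho : R, exists mubar : R, exists C : R,
     0 < rho /\ 0 < mubar <= muhat /\ 0 < C /\
     forall (mu : R) (x l dxN dlN : 'cV[R]_n),
       0 < mu <= mubar ->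
       pdist x l xs ls < delta -> vpos x -> vpos l ->
       pdist x l (xmu mu) (lmu mu) < rho ->
       enorm (Fmu f mu x l) <= C1 * mu ->
       Fprime f x l *m col_mx dxN dlN = - Fmu f (sigma * mu) x l ->
       (forall i : 'I_n, xs i 0 = 0 ->
          `|(- x i 0 + sigma * mu / l i 0) - dxN i 0| <= C * mu ^+ 2) /\
       (forall i : 'I_n, 0 < xs i 0 ->
          `|(- l i 0 + sigma * mu / x i 0) - dlN i 0| <= C * mu ^+ 2)).
Proof.
have part1 : forall (mu : R) (x l dxN dlN : 'cV[R]_n),
     vpos x -> vpos l ->
     Fprime f x l *m col_mx dxN dlN = - Fmu f (sigma * mu) x l ->
     forall i : 'I_n,
       ((- x i 0 + sigma * mu / l i 0) - dxN i 0 = x i 0 / l i 0 * dlN i 0) /\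
       ((- l i 0 + sigma * mu / x i 0) - dlN i 0 = l i 0 / x i 0 * dxN i 0).
  move=> mu x l dx dl px pl he i.
  have h := newton_bot i he.
  have l0 : l i 0 != 0 by apply: lt0r_neq0.
  have x0 : x i 0 != 0 by apply: lt0r_neq0.
  have e1 : dx i 0 = (- (l i 0 * x i 0 - sigma * mu) - x i 0 * dl i 0) / l i 0.
    by rewrite -h; field.
  have e2 : dl i 0 = (- (l i 0 * x i 0 - sigma * mu) - l i 0 * dx i 0) / x i 0.
    by rewrite -h; field.
  split; [rewrite e1 | rewrite e2]; field; done.
split; first by move=> mu x l dx dl _ _; apply: part1.
move=> C1 C10.
case: H => _ [_ [_ [_ [comp [pos [_ [_ [Hinv [muhat0 [Htraj _]]]]]]]]]].
have [m [m0 Hm]] := fin_posmin pos.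
set sK := Num.sqrt (2 * C1 ^+ 2 + 2 * (n + n)%:R).
have sK0 : 0 <= sK by apply: sqrtr_ge0.
set D := (`|M| + 1) * (sK + 1).
have D0 : 0 < D by apply: mulr_gt0; apply: ltr_wpDl.
exists (m / 4), (Num.min muhat (m / (4 * (`|C4| + 1)))),
  (4 * (1 + C1) / m ^+ 2 * D).
have C40 : 0 < `|C4| + 1 by apply: ltr_wpDl.
split; first by apply: divr_gt0.
split; first by rewrite lt_min muhat0 /= ge_min lexx divr_gt0 // mulr_gt0.
split; first by apply: mulr_gt0 => //; apply: divr_gt0; [apply: mulr_gt0 => //; lra | apply: exprn_gt0].
move=> mu x l dx dl /andP [mu0 mub] hd px pl hrho hF he.
have mumu : mu <= muhat by apply: (le_trans mub); rewrite ge_min lexx.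
have [_ [_ [_ [_ htr]]]] := Htraj mu (ltac:(by rewrite mu0)).
have hC4 : C4 * mu <= m / 4.
  have : mu <= m / (4 * (`|C4| + 1)) by apply: (le_trans mub); rewrite ge_min lexx orbT.
  rewrite ler_pdivlMr // => h1.
  have : C4 <= `|C4| by apply: ler_norm.
  have : 0 <= `|C4| by [].
  nra.
have [Hu Hn] := Hinv x l hd.
have ecol : col_mx dx dl = invmx (Fprime f x l) *m (- Fmu f (sigma * mu) x l).
  by rewrite -he mulKmx.
have hcol : enorm (col_mx dx dl) <= D * mu.
  rewrite ecol; apply: (le_trans (Hn _)); rewrite enorm_opp.
  have hs := enorm_Fsig mu0 Hsigma (ltW C10) hF.
  have e0 : 0 <= enorm (Fmu f (sigma * mu) x l) by apply: sqrtr_ge0.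
  have : M <= `|M| by apply: ler_norm.
  have nM : 0 <= `|M| by [].
  move=> hM; apply: (le_trans (y := `|M| * (sK * mu))).
    apply: (le_trans (y := `|M| * enorm (Fmu f (sigma * mu) x l))).
      by apply: ler_wpM2r.
    by apply: ler_wpM2l.
  rewrite /D -mulrA; apply: ler_pM => //; first by apply: mulr_ge0 => //; apply: ltW.
    by lra.
  apply: ler_pM => //; first by apply: ltW.
  by lra.
have hprod : forall i, x i 0 * l i 0 <= (1 + C1) * mu.
  move=> i; have := @enorm_entry R (n + n)%N (Fmu f mu x l) (rshift n i).
  rewrite Fmu_bot => h1.
  have h2 := le_trans h1 hF.
  have := ler_norm (l i 0 * x i 0 - mu).
  rewrite [x i 0 * l i 0]mulrC; lra.
split.
- move=> i hx.
  have [e1 _] := part1 mu x l dx dl px pl he i.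
  rewrite e1.
  have hl : m / 2 <= l i 0.
    have h1 := Hm i; rewrite hx add0r in h1.
    have h2 := le_lt_trans (pdist_l x l (xmu mu) (lmu mu) i) hrho.
    have h3 := le_trans (pdist_l (xmu mu) (lmu mu) xs ls i) htr.
    have h4 : lmu mu i 0 - l i 0 <= `|l i 0 - lmu mu i 0| by rewrite -normrN opprB ler_norm.
    have h5 : ls i 0 - lmu mu i 0 <= `|lmu mu i 0 - ls i 0| by rewrite -normrN opprB ler_norm.
    lra.
  have hd' : `|dl i 0| <= D * mu.
    apply: le_trans hcol.
    by have := @enorm_entry R (n + n)%N (col_mx dx dl) (rshift n i); rewrite col_mxEd.
  apply: (le_trans (key_bound m0 hl (ltW (px i)) (hprod i) hd')).
  rewrite le_eqVlt; apply/orP; left; apply/eqP.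
  by field; apply: lt0r_neq0.
- move=> i hx.
  have [_ e2] := part1 mu x l dx dl px pl he i.
  rewrite e2.
  have hl0 : ls i 0 = 0.
    by have := comp i; move/eqP; rewrite mulf_eq0 => /orP [/eqP h|/eqP //]; move: hx; rewrite h ltxx.
  have hl : m / 2 <= x i 0.
    have h1 := Hm i; rewrite hl0 addr0 in h1.
    have h2 := le_lt_trans (pdist_x x l (xmu mu) (lmu mu) i) hrho.
    have h3 := le_trans (pdist_x (xmu mu) (lmu mu) xs ls i) htr.
    have h4 : xmu mu i 0 - x i 0 <= `|x i 0 - xmu mu i 0| by rewrite -normrN opprB ler_norm.
    have h5 : xs i 0 - xmu mu i 0 <= `|xmu mu i 0 - xs i 0| by rewrite -normrN opprB ler_norm.
    lra.
  have hd' : `|dx i 0| <= D * mu.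
    apply: le_trans hcol.
    by have := @enorm_entry R (n + n)%N (col_mx dx dl) (lshift n i); rewrite col_mxEu.
  have hp : l i 0 * x i 0 <= (1 + C1) * mu by rewrite mulrC; apply: hprod.
  apply: (le_trans (key_bound m0 hl (ltW (pl i)) hp hd')).
  rewrite le_eqVlt; apply/orP; left; apply/eqP.
  by field; apply: lt0r_neq0.
Qed.
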